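(* Assume the setup in the context, with the fine-tuning regime, and let $0<\epsilon\le 1$ be such that $|\langle\tau_i,\tau_j\rangle|\le\epsilon\|\tau_i\|\|\tau_j\|$ for all $i\neq j$. Let $\mathbf{T}=[\tau_1,\dots,\tau_T]\in\mathbb{R}^{d\times T}$, let $\mathbf{W}_e\in\mathbb{R}^{T\times M}$ and $\mathbf{W}_d\in\mathbb{R}^{M\times T}$ be arbitrary, and let $\hat{\mathbf{T}}=\mathbf{T}\mathbf{W}_e\mathbf{W}_d$ with $i$-th column $\hat\tau_i$ and column error $e_i=\hat\tau_i-\tau_i$. Fix $i\in[T]$ and $\alpha_i\in[0,1]$, let $\theta_{\mathrm{Neg},i}=\theta_0-\alpha_i\hat\tau_i$, and assume local smoothness holds with radius $r\ge 2\sqrt{C}+\|e_i\|$. Then for every $j\in[T]$ with $j\neq i$, $$\mathcal{L}_j(\theta_{\mathrm{Neg},i})-\mathcal{L}_j(\theta_0)\le L_jC\Big(\frac{5}{2}+2\epsilon\Big)+L_j\|e_i\|^2.$$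
   Context: Setup: $\theta_0\in\mathbb{R}^d$ is a pretrained parameter vector; $\theta_1,\dots,\theta_T\in\mathbb{R}^d$ are fine-tuned parameters and $\tau_i:=\theta_i-\theta_0$ are task vectors. For each task $i$, $\mathcal{L}_i:\mathbb{R}^d\to\mathbb{R}$ is a differentiable loss (population risk). Norms are Euclidean. Fine-tuning regime: $\nabla\mathcal{L}_i(\theta_i)=0$ for all $i\in[T]$, and there is $C>0$ with $\|\tau_i\|^2\le C$ for all $i$. Local smoothness with radius $r>0$: for each $i$ there is $L_i\ge 0$ such that for all $\theta$ with $\|\theta-\theta_i\|\le r$, $\big|\mathcal{L}_i(\theta)-\mathcal{L}_i(\theta_i)-\langle\theta-\theta_i,\nabla\mathcal{L}_i(\theta_i)\rangle\big|\le\frac{L_i}{2}\|\theta-\theta_i\|^2$. $\hat{\mathbf{T}}$ is the task-vector matrix reconstructed from the basis $\mathbf{B}=\mathbf{T}\mathbf{W}_e$ via the decoder $\mathbf{W}_d$. *)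

(* Defs.v *)
From HB Require Import structures.
From mathcomp Require Import all_boot all_order all_algebra.
From mathcomp Require Import all_classical all_reals all_analysis.
Set Implicit Arguments. Unset Strict Implicit. Unset Printing Implicit Defensive.
Import Order.TTheory GRing.Theory Num.Theory.
Import numFieldNormedType.Exports.
Local Open Scope ring_scope.

Definition dotv (R : realType) (d : nat) (u v : 'cV[R]_d) : R :=
  \sum_(k < d) u k ord0 * v k ord0.
Definition enorm (R : realType) (d : nat) (u : 'cV[R]_d) : R :=
  Num.sqrt (dotv u u).

Definition grad (R : realType) (d : nat) (f : 'cV[R]_d -> R) (x : 'cV[R]_d)
  : 'cV[R]_d :=
  \col_(k < d) derive f x (delta_mx k ord0).

Definition tau (R : realType) (d nT : nat) (theta0 : 'cV[R]_d)
  (theta : 'I_nT -> 'cV[R]_d) (k : 'I_nT) : 'cV[R]_d := theta k - theta0.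

Definition taskmx (R : realType) (d nT : nat) (theta0 : 'cV[R]_d)
  (theta : 'I_nT -> 'cV[R]_d) : 'M[R]_(d, nT) :=
  \matrix_(a < d, k < nT) tau theta0 theta k a ord0.

Definition tauhat (R : realType) (d nT M : nat) (theta0 : 'cV[R]_d)
  (theta : 'I_nT -> 'cV[R]_d) (We : 'M[R]_(nT, M)) (Wd : 'M[R]_(M, nT))
  (k : 'I_nT) : 'cV[R]_d :=
  col k (taskmx theta0 theta *m We *m Wd).

Definition colerr (R : realType) (d nT M : nat) (theta0 : 'cV[R]_d)
  (theta : 'I_nT -> 'cV[R]_d) (We : 'M[R]_(nT, M)) (Wd : 'M[R]_(M, nT))
  (k : 'I_nT) : 'cV[R]_d :=
  tauhat theta0 theta We Wd k - tau theta0 theta k.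

(* Main.v *)
Require Import Defs.
From HB Require Import structures.
From mathcomp Require Import all_boot all_order all_algebra.
From mathcomp Require Import all_classical all_reals all_analysis.
From mathcomp Require Import ring lra.
Import Order.TTheory GRing.Theory Num.Theory.
Import numFieldNormedType.Exports.
Local Open Scope ring_scope.

Set Implicit Arguments.
Section Dot.
Variables (R : realType) (d : nat).
Implicit Types (u v w : 'cV[R]_d) (a : R).

Lemma dotvC u v : dotv u v = dotv v u.
Proof. by rewrite /dotv; apply: eq_bigr => k _; rewrite mulrC. Qed.
Lemma dotvDl u v w : dotv (u + v) w = dotv u w + dotv v w.
Proof. by rewrite /dotv -big_split; apply: eq_bigr => k _; rewrite !mxE mulrDl. Qed.
Lemma dotvZl a u w : dotv (a *: u) w = a * dotv u w.
Proof. by rewrite /dotv mulr_sumr; apply: eq_bigr => k _; rewrite !mxE mulrA. Qed.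
Lemma dotvNl u w : dotv (- u) w = - dotv u w.
Proof. by rewrite -scaleN1r dotvZl mulN1r. Qed.
Lemma dotvDr u v w : dotv w (u + v) = dotv w u + dotv w v.
Proof. by rewrite dotvC dotvDl !(dotvC w). Qed.
Lemma dotvZr a u w : dotv w (a *: u) = a * dotv w u.
Proof. by rewrite dotvC dotvZl dotvC. Qed.
Lemma dotvNr u w : dotv w (- u) = - dotv w u.
Proof. by rewrite dotvC dotvNl dotvC. Qed.
Lemma dotv0r u : dotv u 0 = 0.
Proof. by rewrite /dotv big1 // => k _; rewrite mxE mulr0. Qed.
Lemma dotv_ge0 u : 0 <= dotv u u.
Proof. by rewrite /dotv sumr_ge0 // => k _; rewrite -expr2 sqr_ge0. Qed.
Lemma enorm_ge0 u : 0 <= enorm u.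
Proof. exact: sqrtr_ge0. Qed.
Lemma enorm2 u : enorm u ^+ 2 = dotv u u.
Proof. by rewrite /enorm sqr_sqrtr // dotv_ge0. Qed.

Lemma cs2 u v : dotv u v ^+ 2 <= dotv u u * dotv v v.
Proof.
set A := dotv u u; set B := dotv u v; set Cc := dotv v v.
have key t : 0 <= A - 2 * t * B + t ^+ 2 * Cc.
  have := dotv_ge0 (u - t *: v).
  rewrite dotvDl !dotvDr !dotvNl !dotvNr !dotvZl !dotvZr (dotvC v u) -/A -/B -/Cc.
  by move=> h; lra.
have C0 : 0 <= Cc by apply: dotv_ge0.
have A0 : 0 <= A by apply: dotv_ge0.
have [Cp|] := ltP 0 Cc.
  have := key (B / Cc).
  have -> : A - 2 * (B / Cc) * B + (B / Cc) ^+ 2 * Cc = A - B ^+ 2 / Cc.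
    by field; rewrite gt_eqF.
  rewrite subr_ge0 ler_pdivrMr // => h; lra.
move=> Cle; have CE : Cc = 0 by apply/eqP; rewrite eq_le Cle C0.
have [BE|Bn] := eqVneq B 0; first by rewrite BE CE; lra.
have := key ((A + 1) / (2 * B)).
have -> : A - 2 * ((A + 1) / (2 * B)) * B + ((A + 1) / (2 * B)) ^+ 2 * Cc = -1.
  by rewrite CE; field.
lra.
Qed.

Lemma cs u v : `|dotv u v| <= enorm u * enorm v.
Proof.
rewrite /enorm -sqrtrM ?dotv_ge0 // -sqrtr_sqr ler_wsqrtr //; exact: cs2.
Qed.

Lemma dotv_le u v : dotv u v <= enorm u * enorm v.
Proof. exact: le_trans (ler_norm _) (cs u v). Qed.

Lemma enormD u v : enorm (u + v) <= enorm u + enorm v.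
Proof.
rewrite -(ger0_norm (addr_ge0 (enorm_ge0 u) (enorm_ge0 v))) -sqrtr_sqr /enorm.
rewrite ler_wsqrtr //.
rewrite dotvDl !dotvDr (dotvC v u) sqrrD -/(enorm u) -/(enorm v) !enorm2.
have := dotv_le u v => h. lra.
Qed.

Lemma enormZ a u : enorm (a *: u) = `|a| * enorm u.
Proof. by rewrite /enorm dotvZl dotvZr mulrA -expr2 sqrtrM ?sqr_ge0 // sqrtr_sqr. Qed.

Lemma enormN u : enorm (- u) = enorm u.
Proof. by rewrite /enorm dotvNl dotvNr opprK. Qed.
End Dot.
Arguments dotvC {R d}.
Arguments dotvDl {R d}.
Arguments dotvZl {R d}.
Arguments dotvNl {R d}.
Arguments dotvDr {R d}.
Arguments dotvZr {R d}.
Arguments dotvNr {R d}.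
Arguments dotv0r {R d}.
Arguments dotv_ge0 {R d}.
Arguments enorm_ge0 {R d}.
Arguments enorm2 {R d}.
Arguments cs2 {R d}.
Arguments cs {R d}.
Arguments dotv_le {R d}.
Arguments enormD {R d}.
Arguments enormZ {R d}.
Arguments enormN {R d}.
Unset Implicit Arguments.
Lemma Dx_bound (R : realType) (d : nat) (u w v : 'cV[R]_d) (al : R) :
  dotv (al *: u + al *: w + v) (al *: u + al *: w + v) <=
  2 * (al ^+ 2 * dotv u u + 2 * al * dotv u v + dotv v v) + 2 * (al ^+ 2 * dotv w w).
Proof.
have := dotv_ge0 (al *: u + v - al *: w).
rewrite !(dotvDl, dotvDr, dotvNl, dotvNr, dotvZl, dotvZr) (dotvC v u) (dotvC w u) (dotvC w v).
move=> h; nra.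
Qed.

Theorem mainTheorem8 (R : realType) (d nT M : nat)
  (theta0 : 'cV[R]_d) (theta : 'I_nT -> 'cV[R]_d)
  (L : 'I_nT -> 'cV[R]_d -> R) (Lc : 'I_nT -> R) (C r eps : R)
  (We : 'M[R]_(nT, M)) (Wd : 'M[R]_(M, nT)) (i : 'I_nT) (alpha : R) :
  (* each loss is differentiable *)
  (forall k (x : 'cV[R]_d), differentiable (L k) x) ->
  (* fine-tuning regime *)
  (forall k, grad (L k) (theta k) = 0) ->
  0 < C ->
  (forall k, enorm (tau theta0 theta k) ^+ 2 <= C) ->
  (* local smoothness with radius r *)
  0 < r ->
  (forall k, 0 <= Lc k) ->
  (forall k (th : 'cV[R]_d), enorm (th - theta k) <= r ->
     `| L k th - L k (theta k) - dotv (th - theta k) (grad (L k) (theta k)) |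
       <= Lc k / 2 * enorm (th - theta k) ^+ 2) ->
  (* near-orthogonality of task vectors *)
  0 < eps <= 1 ->
  (forall k l, k != l ->
     `| dotv (tau theta0 theta k) (tau theta0 theta l) |
       <= eps * enorm (tau theta0 theta k) * enorm (tau theta0 theta l)) ->
  0 <= alpha <= 1 ->
  2 * Num.sqrt C + enorm (colerr theta0 theta We Wd i) <= r ->
  forall j, j != i ->
    L j (theta0 - alpha *: tauhat theta0 theta We Wd i) - L j theta0
      <= Lc j * C * (5 / 2 + 2 * eps)
         + Lc j * enorm (colerr theta0 theta We Wd i) ^+ 2.
Proof.
move=> _ grad0 C0 tauC r0 Lc0 smooth /andP[e0 e1] orth /andP[a0 a1] hr j ji.
set ti := tau theta0 theta i; set tj := tau theta0 theta j.
set e := colerr theta0 theta We Wd i.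
have the : tauhat theta0 theta We Wd i = ti + e by rewrite /e /colerr addrC subrK.
set x := alpha *: ti + alpha *: e + tj.
have dx : theta0 - alpha *: tauhat theta0 theta We Wd i - theta j = - x.
  by rewrite the /x /tj /tau; apply/matrixP => a b; rewrite !mxE; ring.
have d0 : theta0 - theta j = - tj by rewrite /tj /tau opprB.
have sC0 : 0 <= Num.sqrt C by apply: sqrtr_ge0.
have sCC : Num.sqrt C * Num.sqrt C = C by rewrite -expr2 sqr_sqrtr // ltW.
have nt k : enorm (tau theta0 theta k) <= Num.sqrt C.
  by rewrite /enorm ler_wsqrtr // -enorm2 tauC.
have nti := nt i; have ntj := nt j.
have ti0 := enorm_ge0 ti; have tj0 := enorm_ge0 tj; have ee0 := enorm_ge0 e.
have nx : enorm x <= alpha * enorm ti + alpha * enorm e + enorm tj.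
  apply: le_trans (enormD _ _) _; rewrite lerD2r.
  apply: le_trans (enormD _ _) _.
  by rewrite !enormZ ger0_norm.
have nxr : enorm x <= r.
  apply: le_trans nx _; apply: le_trans hr.
  have : alpha * enorm ti <= enorm ti by rewrite ler_piMl.
  have : alpha * enorm e <= enorm e by rewrite ler_piMl.
  lra.
have h1 := smooth j (theta0 - alpha *: tauhat theta0 theta We Wd i).
rewrite dx enormN grad0 dotv0r subr0 nxr in h1.
have h2 := smooth j theta0.
rewrite d0 enormN grad0 dotv0r subr0 in h2.
have tjr : enorm tj <= r by lra.
move: (h1 isT) (h2 tjr); rewrite !ler_norml => /andP[_ h1'] /andP[h2' _].
have ij : i != j by rewrite eq_sym.
have hij := orth i j ij.
have pij : enorm ti * enorm tj <= C.
  by rewrite -sCC; apply: ler_pM.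
have dij : `|dotv ti tj| <= eps * C.
  apply: le_trans hij _; rewrite -mulrA ler_wpM2l //; lra.
move: dij; rewrite ler_norml => /andP[dijl dijr].
have Dti : dotv ti ti <= C by rewrite -enorm2 tauC.
have Dtj : dotv tj tj <= C by rewrite -enorm2 tauC.
have De0 := dotv_ge0 e.
have Dti0 := dotv_ge0 ti.
have Dx : dotv x x <= 2 * (alpha ^+ 2 * dotv ti ti + 2 * alpha * dotv ti tj + dotv tj tj)
                      + 2 * (alpha ^+ 2 * dotv e e).
  exact: Dx_bound.
have a2 : alpha ^+ 2 <= 1 by rewrite expr_le1.
have Dx2 : dotv x x <= 4 * C + 4 * eps * C + 2 * dotv e e.
  apply: le_trans Dx _.
  have : alpha ^+ 2 * dotv ti ti <= C.
    apply: le_trans Dti; rewrite ler_piMl //.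
  have : alpha ^+ 2 * dotv e e <= dotv e e by rewrite ler_piMl.
  have : alpha * dotv ti tj <= eps * C.
    have [hp|hn] := lerP 0 (dotv ti tj).
      apply: le_trans dijr; rewrite ler_piMl //.
    have : alpha * dotv ti tj <= 0 by rewrite mulr_ge0_le0 // ltW.
    have : 0 <= eps * C by rewrite mulr_ge0 // ltW.
    lra.
  lra.
rewrite -!enorm2 in h1' h2' Dx2 *.
have S : enorm x ^+ 2 + enorm tj ^+ 2 <= 5 * C + 4 * eps * C + 2 * enorm e ^+ 2.
  rewrite -enorm2 in Dtj; lra.
have L0 := Lc0 j.
have : Lc j / 2 * (enorm x ^+ 2 + enorm tj ^+ 2) <=
       Lc j / 2 * (5 * C + 4 * eps * C + 2 * enorm e ^+ 2).
  by rewrite ler_wpM2l // divr_ge0.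
have -> : Lc j / 2 * (5 * C + 4 * eps * C + 2 * enorm e ^+ 2) =
          Lc j * C * (5 / 2 + 2 * eps) + Lc j * enorm e ^+ 2 by field.
move: h1' h2'.
set X := Lc j / 2 * enorm x ^+ 2; set Y := Lc j / 2 * enorm tj ^+ 2.
have -> : Lc j / 2 * (enorm x ^+ 2 + enorm tj ^+ 2) = X + Y by rewrite /X /Y mulrDr.
lra.
Qed.
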